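(* Let $S_n(x)=(18n+24)\sin(x)-(9n+27)\sin((n+1)x)+9n\sin((n+2)x)+2\sin(4x)-\sin(5x)$. Let $n=3m$ with $m\geq 7$ an integer, and let $x\in(2\pi/3-1/n,\,2\pi/3)$. Then $$S_n''(x)=-(18n+24)\sin(x)+(9n+27)(n+1)^2\sin((n+1)x)-9n(n+2)^2\sin((n+2)x)-32\sin(4x)+25\sin(5x)>0.$$ *)

(* Defs.v *)
From Stdlib Require Import Reals.
From Coquelicot Require Import Coquelicot.
Open Scope R_scope.

Definition S (n : nat) (x : R) : R :=
  (18 * INR n + 24) * sin x
  - (9 * INR n + 27) * sin ((INR n + 1) * x)
  + 9 * INR n * sin ((INR n + 2) * x)
  + 2 * sin (4 * x) - sin (5 * x).

Definition S2 (n : nat) (x : R) : R :=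
  - (18 * INR n + 24) * sin x
  + (9 * INR n + 27) * (INR n + 1) ^ 2 * sin ((INR n + 1) * x)
  - 9 * INR n * (INR n + 2) ^ 2 * sin ((INR n + 2) * x)
  - 32 * sin (4 * x) + 25 * sin (5 * x).

(* Main.v *)
Require Import Defs.
From Stdlib Require Import Reals Lra Psatz.
From Coquelicot Require Import Coquelicot.
Open Scope R_scope.

Definition S1 (n : nat) (x : R) : R :=
  (18 * INR n + 24) * cos x
  - (9 * INR n + 27) * (INR n + 1) * cos ((INR n + 1) * x)
  + 9 * INR n * (INR n + 2) * cos ((INR n + 2) * x)
  + 8 * cos (4 * x) - 5 * cos (5 * x).

Lemma dS (n : nat) (y : R) : is_derive (S n) y (S1 n y).
Proof. unfold S, S1. auto_derive; auto. ring. Qed.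

Lemma dS1 (n : nat) (y : R) : is_derive (S1 n) y (S2 n y).
Proof. unfold S1, S2. auto_derive; auto. ring. Qed.

Lemma deriv2 (n : nat) (x : R) : is_derive_n (S n) 2 x (S2 n x).
Proof.
  simpl.
  apply is_derive_ext with (S1 n).
  - intro t. symmetry. apply is_derive_unique. apply dS.
  - apply dS1.
Qed.

Lemma cos_lb (u : R) : 0 < u -> u < 4 -> cos u >= 1 - u * u / 2.
Proof.
  intros Hu Hu4.
  replace u with (2 * (u/2)) at 1 by field.
  rewrite cos_2a_sin.
  pose proof (sin_lt_x (u/2) ltac:(lra)).
  pose proof (sin_pos_tech (u/2) ltac:(lra)).
  set (s := sin (u/2)) in *. set (w := u/2) in *.
  assert (u = 2 * w) by (unfold w; field). rewrite H1.
  apply Rle_ge. nra.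
Qed.

Theorem lemma6 (m : nat) (x : R) :
  (7 <= m)%nat ->
  2 * PI / 3 - 1 / INR (3 * m) < x < 2 * PI / 3 ->
  is_derive_n (S (3 * m)) 2 x (S2 (3 * m) x) /\ 0 < S2 (3 * m) x.
Proof.
  intros Hm Hx. split; [apply deriv2|].
  assert (HN : INR (3 * m) = 3 * INR m) by (rewrite mult_INR; simpl; ring).
  assert (Hm7 : 7 <= INR m) by (apply (le_INR 7 m) in Hm; simpl in Hm; lra).
  set (N := INR (3*m)) in *.
  set (t := 2 * PI / 3 - x).
  assert (Ht0 : 0 < t) by (unfold t; lra).
  assert (Ht1 : N * t < 1).
  { assert (t < 1 / N) by (unfold t; lra).
    apply (Rmult_lt_compat_l N) in H; [|lra].
    replace (N * (1/N)) with 1 in H by (field; lra). lra. }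
  assert (E1 : (N + 1) * x = (2 * PI / 3 - (N + 1) * t) + 2 * INR m * PI)
    by (unfold t; rewrite HN; field).
  assert (E2 : (N + 2) * x = (PI / 3 - (N + 2) * t + PI) + 2 * INR m * PI)
    by (unfold t; rewrite HN; field).
  assert (s23 : sin (2 * PI / 3) = sqrt 3 / 2).
  { replace (2 * PI / 3) with (PI - PI / 3) by field. rewrite sin_PI_x. apply sin_PI3. }
  assert (c23 : cos (2 * PI / 3) = - (1/2)).
  { replace (2 * PI / 3) with (- (PI / 3) + PI) by field. rewrite neg_cos, cos_neg, cos_PI3. ring. }
  unfold S2. fold N. rewrite E1, E2, !sin_period, neg_sin, !sin_minus, s23, c23, sin_PI3, cos_PI3.
  set (u := (N + 1) * t). set (v := (N + 2) * t).
  assert (Hu0 : 0 < u) by (unfold u; nra).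
  assert (Hv0 : 0 < v) by (unfold v; nra).
  assert (Hv1 : v < 1 + 2 / 21).
  { unfold v. assert (2 * t <= 2 / 21).
    { assert (21 * t <= N * t) by nra. lra. }
    lra. }
  assert (Hu1 : u < v) by (unfold u, v; nra).
  pose proof (cos_lb u Hu0 ltac:(lra)) as Cu. pose proof (cos_lb v Hv0 ltac:(lra)) as Cv.
  assert (su : 0 < sin u) by (apply sin_pos_tech; lra).
  assert (sv : sin v <= 1) by (pose proof (SIN_bound v); lra).
  assert (sv0 : 0 < sin v) by (apply sin_pos_tech; lra).
  assert (Cu' : cos u >= 2/5) by nra.
  assert (Cv' : cos v >= 2/5) by nra.
  assert (sq : sqrt 3 / 2 >= 43/50).
  { assert (1.72 <= sqrt 3). { rewrite <- (sqrt_pow2 1.72) by lra. apply sqrt_le_1_alt. lra. }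
    lra. }
  pose proof (SIN_bound x). pose proof (SIN_bound (4*x)). pose proof (SIN_bound (5*x)).
  assert (HN21 : N >= 21) by lra.
  set (P := (9 * N + 27) * (N + 1) ^ 2).
  set (Q := 9 * N * (N + 2) ^ 2).
  assert (HQ : Q >= 9 * N * N * N) by (unfold Q; nra).
  assert (HPQ : P >= Q) by (unfold P, Q; nra).
  set (s := sqrt 3 / 2) in *.
  assert (A1 : P * (s * cos u) >= P * ((43/50) * (2/5))).
  { apply Rmult_ge_compat_l; [unfold P; nra|]. nra. }
  assert (A2 : Q * (s * cos v) >= Q * ((43/50) * (2/5))).
  { apply Rmult_ge_compat_l; [nra|]. nra. }
  assert (HQ0 : 0 <= Q) by nra.
  assert (A3 : 0 <= P * sin u) by (apply Rmult_le_pos; lra).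
  assert (A4 : Q * sin v <= Q * 1) by (apply Rmult_le_compat_l; lra).
  nra.
Qed.
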